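(* Let $G=(V,E)$ be a finite simple graph with $n=|V|$ vertices and $m=|E|$ edges, where $n+m$ is even, and let $L$ be its connection matrix. Then $L^2$ is similar over $\mathbb{R}$ to a real symplectic matrix, i.e. to a matrix $S$ satisfying $S^TJS=J$, where $J=\begin{pmatrix}0&I\\-I&0\end{pmatrix}$ is the standard $(n+m)\times(n+m)$ symplectic form.
   Context: Let $G=(V,E)$ be a finite simple graph. Its associated $1$-dimensional simplicial complex is the set of simplices $X=\{\{v\}: v\in V\}\cup E$, where each edge is regarded as a $2$-element subset of $V$; index $(|V|+|E|)\times(|V|+|E|)$ matrices by $X$. The connection matrix $L$ has $L(x,y)=1$ if $x\cap y\neq\emptyset$ and $L(x,y)=0$ otherwise. *)

(* Defs.v *)
From HB Require Import structures.
From mathcomp Require Import all_boot all_order all_algebra.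
Set Implicit Arguments. Unset Strict Implicit. Unset Printing Implicit Defensive.
Import Order.TTheory GRing.Theory Num.Theory.
Local Open Scope ring_scope.

(* A finite simple graph is (T, e) with T : finType and e : rel T symmetric
   and irreflexive. *)
Definition simplices (T : finType) (e : rel T) : {set {set T}} :=
  [set A : {set T} | (#|A| == 1)%N ||
     ((#|A| == 2)%N && [forall x in A, forall y in A, (x != y) ==> e x y])].

Definition connmx (R : nzRingType) (T : finType) (e : rel T)
  : 'M[R]_(#|simplices e|) :=
  \matrix_(i, j)
    (if (enum_val i :&: enum_val j) != set0 then 1 else 0).

(* The standard symplectic form J = [[0, I], [-I, 0]] of size N (N even),
   written out entrywise with blocks of size N./2. *)
Definition symplJ (R : nzRingType) (N : nat) : 'M[R]_N :=
  \matrix_(i < N, j < N)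
    (if ((i < N./2)%N && (nat_of_ord j == (nat_of_ord i + N./2)%N)) then 1
     else if ((N./2 <= i)%N && ((nat_of_ord j + N./2)%N == nat_of_ord i)) then -1
     else 0).

(* Main.v *)
Require Import Defs.
From HB Require Import structures.
From mathcomp Require Import all_boot all_order all_algebra.
From mathcomp Require Import lra ring zify.
From Stdlib Require Import Classical.
Import Order.TTheory GRing.Theory Num.Theory.
Local Open Scope ring_scope.
Set Implicit Arguments. Unset Strict Implicit. Unset Printing Implicit Defensive.


Lemma mx11_eq0 (R : nzRingType) (c : 'M[R]_1) : (c == 0) = (c 0 0 == 0).
Proof.
apply/eqP/eqP => [->|h]; first by rewrite mxE.
by apply/matrixP => i j; rewrite !ord1 h mxE.
Qed.

Section Form.
Variable (R : rcfType) (N : nat) (W : 'M[R]_N).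
Hypothesis Wskew : W^T = - W.

Definition om (x y : 'rV[R]_N) : R := (x *m W *m y^T) 0 0.

Lemma omC x y : om x y = - om y x.
Proof.
rewrite /om -[in LHS](trmxK (x *m W *m y^T)) mxE !trmx_mul trmxK Wskew.
by rewrite mulNmx mulmxN mulmxA mxE.
Qed.

Lemma omxx x : om x x = 0.
Proof. have := omC x x; move=> h; lra. Qed.

Lemma omDl x y z : om (x + y) z = om x z + om y z.
Proof. by rewrite /om !mulmxDl mxE. Qed.
Lemma omZl a x z : om (a *: x) z = a * om x z.
Proof. by rewrite /om -!scalemxAl mxE. Qed.
Lemma omNl x z : om (- x) z = - om x z.
Proof. by rewrite -scaleN1r omZl mulN1r. Qed.
Lemma omBl x y z : om (x - y) z = om x z - om y z.
Proof. by rewrite omDl omNl. Qed.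
Lemma omDr x y z : om z (x + y) = om z x + om z y.
Proof. by rewrite omC omDl (omC x) (omC y); lra. Qed.
Lemma omZr a x z : om z (a *: x) = a * om z x.
Proof. by rewrite omC omZl (omC x); lra. Qed.
Lemma omBr x y z : om z (x - y) = om z x - om z y.
Proof. by rewrite -scaleN1r omDr omZr; lra. Qed.
Lemma omsumr (I : Type) (r : seq I) (P : pred I) (F : I -> 'rV_N) z :
  om z (\sum_(i <- r | P i) F i) = \sum_(i <- r | P i) om z (F i).
Proof.
elim/big_rec2: _ => [|i y1 y2 _ <-]; last by rewrite omDr.
by rewrite /om trmx0 mulmx0 mxE.
Qed.

Lemma sub_ker_om x u : (x <= kermx (W *m u^T))%MS = (om x u == 0).
Proof. by rewrite sub_kermx mx11_eq0 mulmxA. Qed.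

Definition nondeg (U : 'M[R]_N) :=
  forall x : 'rV_N, (x <= U)%MS ->
     (forall y : 'rV_N, (y <= U)%MS -> om x y = 0) -> x = 0.

Lemma darboux k : forall U : 'M[R]_N, (\rank U <= k)%N -> nondeg U ->
  exists d (e f : nat -> 'rV[R]_N),
   [/\ forall i, (i < d)%N -> (e i <= U)%MS /\ (f i <= U)%MS,
       forall i j, (i < d)%N -> (j < d)%N ->
          [/\ om (e i) (f j) = (i == j)%:R, om (e i) (e j) = 0 & om (f i) (f j) = 0]
     & forall x, (x <= U)%MS -> exists a b : nat -> R,
          x = \sum_(i < d) (a i *: e i + b i *: f i)].
Proof.
have base U : U = 0 -> exists d (e f : nat -> 'rV[R]_N),
   [/\ forall i, (i < d)%N -> (e i <= U)%MS /\ (f i <= U)%MS,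
       forall i j, (i < d)%N -> (j < d)%N ->
          [/\ om (e i) (f j) = (i == j)%:R, om (e i) (e j) = 0 & om (f i) (f j) = 0]
     & forall x, (x <= U)%MS -> exists a b : nat -> R,
          x = \sum_(i < d) (a i *: e i + b i *: f i)].
  move=> U0; exists 0%N, (fun _ => 0), (fun _ => 0); split => //.
  move=> x; rewrite U0 => /submx0null ->.
  by exists (fun _ => 0), (fun _ => 0); rewrite big_ord0.
elim: k => [|k IH] U rU nU.
  by apply: base; apply/eqP; rewrite -mxrank_eq0 -leqn0.
case: (eqVneq U 0) => [U0|Un0]; first exact: base.
have [i ui] : exists i, row i U != 0.
  case: (pickP (fun i => row i U != 0)) => [i ui|H]; first by exists i.
  by case/eqP: Un0; apply/row_matrixP => i; rewrite row0; apply/eqP; move: (H i) => /negbFE.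
set u := row i U.
have uU : (u <= U)%MS by apply: row_sub.
have [y [yU uy]] : exists y, (y <= U)%MS /\ om u y != 0.
  apply: NNPP => H; move/eqP: ui; apply; apply: (nU _ uU) => y0 yU.
  by case: (eqVneq (om u y0) 0) => // hy; case: H; exists y0; split.
set v := (om u y)^-1 *: y.
have vU : (v <= U)%MS by apply: scalemx_sub.
have uv : om u v = 1 by rewrite omZr mulVf.
have vu : om v u = -1 by rewrite omC uv.
clearbody v.
set U' := (U :&: kermx (W *m u^T) :&: kermx (W *m v^T))%MS.
have U'P (x : 'rV_N) : (x <= U')%MS = [&& (x <= U)%MS, om x u == 0 & om x v == 0].
  by rewrite !sub_capmx !sub_ker_om andbA.
have U'U : (U' <= U)%MS by rewrite /U' -capmxA capmxSl.
have dec (x : 'rV_N) : (x <= U)%MS -> ((x - om x v *: u + om x u *: v)%R <= U')%MS.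
  move=> xU; rewrite U'P; apply/and3P; split.
  - by apply: addmx_sub; [apply: addmx_sub => //; by rewrite -scaleNr scalemx_sub|apply: scalemx_sub].
  - by rewrite omDl omBl !omZl omxx vu; apply/eqP; lra.
  - by rewrite omDl omBl !omZl omxx uv; apply/eqP; lra.
have rU' : (\rank U' <= k)%N.
  rewrite -ltnS; apply: leq_trans rU; apply: rank_ltmx; rewrite ltmxE U'U /=.
  apply/negP => /(submx_trans uU); rewrite U'P => /and3P [_ _].
  by rewrite uv oner_eq0.
have nU' : nondeg U'.
  move=> x xU' hx; apply: nU; first exact: submx_trans xU' U'U.
  move: xU'; rewrite U'P => /and3P [_ /eqP xu /eqP xv] z zU.
  have -> : z = (z - om z v *: u + om z u *: v) + om z v *: u - om z u *: v.
    by rewrite addrAC addrK subrK.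
  by rewrite omBr omDr !omZr xu xv (hx _ (dec z zU)); lra.
have [d [e' [f' [H1 H2 H3]]]] := IH U' rU' nU'.
exists d.+1, (fun i => if (i < d)%N then e' i else u), (fun i => if (i < d)%N then f' i else v).
split.
- move=> j _; case: ifP => jd; last by [].
  by have [] := H1 j jd; split; apply: submx_trans U'U.
- move=> a b; rewrite !ltnS => ha hb.
  have inU' (w : 'rV_N) : (w <= U')%MS -> om w u = 0 /\ om w v = 0.
    by rewrite U'P => /and3P [_ /eqP -> /eqP ->].
  case: (ltnP a d) => ad; case: (ltnP b d) => bd.
  + by apply: H2.
  + have [ea fa] := H1 a ad.
    have [eu ev] := inU' _ ea; have [fu fv] := inU' _ fa.
    have -> : (a == b) = false by apply/negbTE; rewrite neq_ltn (leq_trans ad bd).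
    by split.
  + have [eb fb] := H1 b bd.
    have [eu ev] := inU' _ eb; have [fu fv] := inU' _ fb.
    have -> : (a == b) = false by apply/negbTE; rewrite neq_ltn (leq_trans bd ad) orbT.
    by rewrite (omC u) (omC u) (omC v) eu fu fv oppr0; split.
  + have -> : a = d by apply/eqP; rewrite eqn_leq ha ad.
    have -> : b = d by apply/eqP; rewrite eqn_leq hb bd.
    by rewrite eqxx !omxx uv.
- move=> x xU.
  have [a [b ha]] := H3 _ (dec x xU).
  exists (fun i => if (i < d)%N then a i else om x v), (fun i => if (i < d)%N then b i else - om x u).
  rewrite big_ord_recr /= ltnn.
  under eq_bigr => j _ do rewrite (ltn_ord j).
  by rewrite -ha scaleNr addrACA subrK subrr addr0.
Qed.
End Form.
Lemma sum_delta (R : nzRingType) n (F : 'I_n -> R) (j0 : 'I_n) :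
  (forall j, j != j0 -> F j = 0) -> \sum_j F j = F j0.
Proof. by move=> h; rewrite (bigD1 j0) //= big1 ?addr0 // => j /h. Qed.
Arguments sum_delta {R n F} j0.

Section SymplJ.
Variable (R : comUnitRingType) (N : nat).
Hypothesis Nev : ~~ odd N.
Let h := N./2.
Lemma NE : N = (h + h)%N.
Proof. by rewrite addnn /h even_halfK. Qed.

Lemma JE (i j : 'I_N) : symplJ R N i j =
  if ((i < h)%N && (nat_of_ord j == (i + h)%N)) then 1
  else if ((h <= i)%N && ((j + h)%N == i)) then -1 else 0.
Proof. by rewrite /symplJ mxE. Qed.

Lemma JJ : symplJ R N *m symplJ R N = - 1%:M.
Proof.
apply/matrixP => i k; rewrite !mxE.
case: (ltnP i h) => ih.
- have lt : (i + h < N)%N by rewrite [in X in (_ < X)%N]NE ltn_add2r.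
  rewrite (sum_delta (Ordinal lt)) => [|j nj]; last first.
    rewrite JE ih /=; case: eqP => [ej|_]; first by case/eqP: nj; apply: val_inj.
    by rewrite (leqNgt h i) ih mul0r.
  rewrite !JE /= ih eqxx mul1r ltnNge leq_addl /= eqn_add2r.
  by case: (eqVneq k i) => [->|nki]; rewrite ?eqxx // ifF ?oppr0 //; apply/negbTE.
- have lt : (i - h < N)%N by apply: leq_ltn_trans (leq_subr _ _) (ltn_ord i).
  rewrite (sum_delta (Ordinal lt)) => [|j nj]; last first.
    rewrite JE ltnNge ih /=; case: eqP => [ej|_]; last by rewrite mul0r.
    by case/eqP: nj; apply: val_inj => /=; rewrite -ej addnK.
  have ihh : (i - h < h)%N by rewrite ltn_subLR // -NE.
  rewrite !JE /= ltnNge ih /= (subnK ih) eqxx mulN1r ihh /=.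
  case: (eqVneq k i) => [->|nki]; first by rewrite eqxx.
  rewrite ifF; first by rewrite leqNgt ihh /= oppr0. exact: negbTE nki.
Qed.

Lemma J_unit : symplJ R N \in unitmx.
Proof. by have [] := @mulmx1_unit _ _ (symplJ R N) (- symplJ R N) => //; rewrite mulmxN JJ opprK. Qed.
End SymplJ.

Definition natrow (R : nzRingType) (m n : nat) (A : 'M[R]_(m, n)) (k : nat) : 'rV[R]_n :=
  if (insub k : option 'I_m) is Some i then row i A else 0.

Lemma natrowE (R : nzRingType) m n (A : 'M[R]_(m, n)) (i : 'I_m) : natrow A i = row i A.
Proof. by rewrite /natrow valK. Qed.

Lemma natrow_sub (F : fieldType) m n (A : 'M[F]_(m, n)) k : (natrow A k <= A)%MS.
Proof. by rewrite /natrow; case: insub => [i|]; rewrite ?row_sub ?sub0mx. Qed.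

Lemma row_diag_mul (R : nzRingType) m n (d : 'rV[R]_m) (A : 'M[R]_(m, n)) i :
  row i (diag_mx d *m A) = d 0 i *: row i A.
Proof. by apply/rowP => j; rewrite mul_diag_mx !mxE. Qed.

Lemma sos (R : rcfType) n (z : 'rV[R]_n) : (z *m z^T) 0 0 = 0 -> z = 0.
Proof.
rewrite mxE => h; apply/rowP => k; rewrite mxE.
have pos : forall j, xpredT j -> 0 <= z 0 j * z^T j 0.
  by move=> j _; rewrite mxE -expr2 sqr_ge0.
have := psumr_eq0P pos h isT (i:=k).
by rewrite mxE => /eqP; rewrite mulf_eq0 orbb => /eqP.
Qed.

Definition Jf (R : nzRingType) (h i j : nat) : R :=
  if ((i < h)%N && (j == (i + h)%N)) then 1
  else if ((h <= i)%N && ((j + h)%N == i)) then -1 else 0.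

Lemma symplJE (R : nzRingType) N (i j : 'I_N) : symplJ R N i j = Jf R N./2 i j.
Proof. by rewrite /symplJ mxE. Qed.

Definition typ (d h i : nat) := ((if (i < h)%N then i else (i - h)%N) < d)%N.

Lemma Jf_typ (R : nzRingType) d h i j : (i < h + h)%N -> (j < h + h)%N ->
  Jf R h i j != 0 -> typ d h i = typ d h j.
Proof.
rewrite /Jf /typ => hi hj.
case: (ltnP i h) => ih /=.
  case: (eqVneq j (i + h)%N) => [->|_]; last by rewrite eqxx.
  by rewrite [(i + h < h)%N]ltnNge leq_addl /= addnK.
case: (eqVneq (j + h)%N i) => [hji|]; last by rewrite eqxx.
by rewrite -hji addnK; have -> : (j < h)%N by lia.
Qed.

Section Layout.
Variable (R : rcfType) (N : nat) (W : 'M[R]_N).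
Hypothesis Wskew : W^T = - W.
Variables (d h : nat) (e f : nat -> 'rV[R]_N).
Hypothesis H2 : forall i j, (i < d)%N -> (j < d)%N ->
          [/\ om W (e i) (f j) = (i == j)%:R, om W (e i) (e j) = 0 & om W (f i) (f j) = 0].

Definition q (i : nat) := if (i < h)%N then e i else f (i - h)%N.

Lemma om_q i j : (i < h + h)%N -> (j < h + h)%N -> typ d h i -> typ d h j ->
  om W (q i) (q j) = Jf R h i j.
Proof.
rewrite /q /typ /Jf => hi hj.
case: (ltnP i h) => ih; case: (ltnP j h) => jh /= ti tj.
- have [_ -> _] := H2 ti tj.
  by rewrite ifF //; apply/negbTE; rewrite neq_ltn (leq_trans jh) ?leq_addl.
- have [-> _ _] := H2 ti tj.
  have -> : (j == i + h)%N = (i == j - h)%N by apply/idP/idP => /eqP ?; apply/eqP; lia.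
  by case: (i == j - h)%N.
- rewrite (omC Wskew); have [-> _ _] := H2 tj ti.
  have -> : (j + h == i)%N = (j == i - h)%N by apply/idP/idP => /eqP ?; apply/eqP; lia.
  by case: (j == i - h)%N; rewrite ?mulr1n ?mulr0n ?oppr0.
- have [_ _ ->] := H2 ti tj.
  rewrite ifF //; apply/negbTE; lia.
Qed.
End Layout.

Lemma omE (R : rcfType) N (W : 'M[R]_N) m1 m2 (A : 'M[R]_(m1, N)) (B : 'M[R]_(m2, N)) i j :
  (A *m W *m B^T) i j = om W (row i A) (row j B).
Proof.
rewrite /om -row_mul !mxE; apply: eq_bigr => k _; rewrite !mxE.
by congr (_ * _); rewrite mxE.
Qed.

Section Abstract.
Variable (R : rcfType) (N : nat) (B W : 'M[R]_N).
Hypotheses (Nev : ~~ odd N) (Bsym : B^T = B) (Wskew : W^T = - W) (BWB : B *m W *m B = W)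
  (fixW : forall y : 'rV_N, (y *m B == y) = (y *m W == 0))
  (disj : forall x : 'rV_N, (x <= kermx (B - 1%:M))%MS -> (x <= B - 1%:M)%MS -> x = 0).

Let V1 := kermx (B - 1%:M).
Let V2 := (B - 1%:M).

Lemma V1P (x : 'rV_N) : (x <= V1)%MS = (x *m B == x).
Proof. by rewrite sub_kermx mulmxBr mulmx1 subr_eq0. Qed.

Lemma cap0 : (V1 :&: V2)%MS = 0.
Proof.
apply/eqP; rewrite -submx0; apply/row_subP => i.
rewrite (disj (x:=row i (V1 :&: V2)%MS)) ?sub0mx //.
  exact: submx_trans (row_sub _ _) (capmxSl _ _).
exact: submx_trans (row_sub _ _) (capmxSr _ _).
Qed.

Lemma rfull : row_full (V1 + V2)%MS.
Proof.
by rewrite /row_full mxrank_disjoint_sum ?cap0 // mxrank_ker subnK ?rank_leq_col.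
Qed.

Lemma V2B (x : 'rV_N) : (x <= V2)%MS -> (x *m B <= V2)%MS.
Proof.
case/submxP => a ->; rewrite -mulmxA.
have -> : V2 *m B = B *m V2 by rewrite /V2 mulmxBl mulmxBr mul1mx mulmx1.
by rewrite mulmxA submxMl.
Qed.

Lemma nd2 : nondeg W V2.
Proof.
move=> x xV2 hx.
have xW : x *m W = 0.
  apply: sos.
  have [[a b] /= hz] := sub_addsmxP (submx_full (x *m W) rfull).
  have h0 : a *m V1 *m W = 0 by apply/eqP; rewrite -fixW -V1P submxMl.
  have : om W x (x *m W) = 0.
    rewrite hz omDr // (hx (b *m V2)) ?submxMl // addr0 (omC Wskew).
    by rewrite /om h0 mul0mx mxE oppr0.
  by rewrite /om.
by apply: disj => //; rewrite V1P fixW xW.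
Qed.


Lemma abstract_main : exists P S : 'M[R]_N,
  [/\ P \in unitmx, S^T *m symplJ R N *m S = symplJ R N & B = invmx P *m S *m P].
Proof.
have [d [e [f [H1 H2 H3]]]] := @darboux _ _ W Wskew (\rank V2) V2 (leqnn _) nd2.
pose E2 : 'M[R]_(d.*2, N) := \matrix_(i < d.*2) q d e f i.
have E2W : E2 *m W *m E2^T = symplJ R d.*2.
  apply/matrixP => i j; rewrite omE !rowK symplJE doubleK.
  have hi : (i < d + d)%N by rewrite addnn.
  have hj : (j < d + d)%N by rewrite addnn.
  apply: (om_q Wskew H2) => //; rewrite /typ; case: ifP => //; lia.
have rkE2 : \rank E2 = d.*2.
  apply/eqP; rewrite eqn_leq rank_leq_row /=.
  rewrite -{1}(mxrank_unit (J_unit R (negbT (odd_double d)))) -E2W.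
  exact: leq_trans (mxrankM_maxl _ _) (mxrankM_maxl _ _).
have E2V2 : (E2 <= V2)%MS.
  apply/row_subP => i; rewrite rowK /q; case: ifP => hi; first exact: (H1 _ hi).1.
  have hi2 : (i < d + d)%N by rewrite addnn ltn_ord.
  by apply: (H1 _ _).2; lia.
have eE2 (i : nat) (hi : (i < d)%N) : (e i <= E2)%MS.
  have hi2 : (i < d.*2)%N by rewrite -addnn; lia.
  have -> : e i = row (Ordinal hi2) E2 by rewrite rowK /q /= hi.
  exact: row_sub.
have fE2 (i : nat) (hi : (i < d)%N) : (f i <= E2)%MS.
  have hi2 : (i + d < d.*2)%N by rewrite -addnn; lia.
  have -> : f i = row (Ordinal hi2) E2 by rewrite rowK /q /= ltnNge leq_addl /= addnK.
  exact: row_sub.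
have V2E2 : (V2 <= E2)%MS.
  apply/row_subP => k; have [a [b ->]] := H3 _ (row_sub k V2).
  apply: summx_sub => i _; apply: addmx_sub; apply: scalemx_sub.
    exact: eE2.
  exact: fE2.
have rkV2 : \rank V2 = d.*2.
  by apply/eqP; rewrite eqn_leq -{1}rkE2 (mxrankS V2E2) -rkE2 (mxrankS E2V2).
pose h := N./2.
have NE : N = (h + h)%N by rewrite addnn /h even_halfK.
have dh : (d <= h)%N.
  have := rank_leq_col V2; rewrite rkV2 -addnn; lia.
pose c := (h - d)%N.
have rkV1 : \rank V1 = (c + c)%N by rewrite /V1 mxrank_ker -/V2 rkV2 -addnn /c; lia.
pose G := row_base V1.
pose g k := natrow G k.
have gV1 k : (g k <= V1)%MS.
  by apply: submx_trans (natrow_sub G k) _; rewrite eq_row_base.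
pose p i := if (i < h)%N then (if (i < d)%N then e i else g (i - d)%N)
            else (if (i - h < d)%N then f (i - h)%N else g (c + (i - h - d))%N).
pose P : 'M[R]_N := \matrix_(i < N) p i.
pose t (i : 'I_N) := typ d h i.
have pq (i : nat) : typ d h i -> p i = q h e f i.
  by rewrite /p /q /typ; case: ifP => _ ->.
have pV2 (i : nat) : typ d h i -> (p i <= V2)%MS.
  rewrite /p /typ; case: ifP => _ hi; rewrite hi; [exact: (H1 _ hi).1 | exact: (H1 _ hi).2].
have pV1 (i : nat) : ~~ typ d h i -> (p i <= V1)%MS.
  by rewrite /p /typ; case: ifP => _ /negbTE ->.
pose d2 : 'rV[R]_N := \row_i (t i)%:R.
pose d1 : 'rV[R]_N := \row_i (~~ t i)%:R.
pose D2 := diag_mx d2. pose D1 := diag_mx d1.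
have D12 : D2 + D1 = 1%:M.
  by apply/matrixP => i j; rewrite !mxE; case: (t i) => /=; rewrite mul0rn ?add0r ?addr0.
have rowD2P (i : 'I_N) : row i (D2 *m P) = (t i)%:R *: p i by rewrite row_diag_mul rowK mxE.
have rowD1P (i : 'I_N) : row i (D1 *m P) = (~~ t i)%:R *: p i by rewrite row_diag_mul rowK mxE.
have E2D2P : (E2 <= D2 *m P)%MS.
  apply/row_subP => i; rewrite rowK /q.
  case: ifP => hi.
    have hiN : (i < N)%N by have := NE; lia.
    have -> : e i = row (Ordinal hiN) (D2 *m P).
      rewrite rowD2P /t /typ /p /= (leq_trans hi dh) hi scale1r //.
    exact: row_sub.
  have hi2 : (i < d + d)%N by rewrite addnn ltn_ord.
  have hiN : (h + (i - d) < N)%N by have := NE; lia.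
  have hd : (i - d < d)%N by lia.
  have -> : f (i - d)%N = row (Ordinal hiN) (D2 *m P).
    rewrite rowD2P /t /typ /p /=.
    have -> : (h + (i - d) < h)%N = false by rewrite ltnNge leq_addr.
    by rewrite addKn hd scale1r.
  exact: row_sub.
have V2D2P : (V2 <= D2 *m P)%MS := submx_trans V2E2 E2D2P.
have hX : (D2 *m P *m B <= D2 *m P)%MS.
  apply/row_subP => i; rewrite row_mul rowD2P -scalemxAl.
  case tI: (t i); last by rewrite scale0r sub0mx.
  by rewrite scale1r; apply: submx_trans V2D2P; apply: V2B; apply: pV2.
have [X hXe] := submxP hX.
have D1PB : D1 *m P *m B = D1 *m P.
  apply/row_matrixP => i; rewrite row_mul rowD1P -scalemxAl.
  case tI: (t i) => /=; first by rewrite !scale0r.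
  by rewrite !scale1r; apply/eqP; rewrite -V1P; apply: pV1; rewrite /t in tI; rewrite tI.
have hJ (i j : 'I_N) : symplJ R N i j != 0 -> t i = t j.
  rewrite symplJE -/h => hne; apply: (Jf_typ d _ _ hne); rewrite -NE //.
have PW : D2 *m P *m W *m (D2 *m P)^T = D2 *m symplJ R N *m D2.
  apply/matrixP => i j; rewrite omE !rowD2P mul_mx_diag mul_diag_mx !mxE.
  rewrite omZl ?omZr //.
  case ti: (t i); case tj: (t j); rewrite ?mul1r ?mulr1 ?mul0r ?mulr0 //.
  by rewrite !pq // (om_q Wskew H2) // -NE.
have d2E i : d2 0 i = (t i)%:R by rewrite mxE.
have d1E i : d1 0 i = (~~ t i)%:R by rewrite mxE.
have DJD (a b : 'rV[R]_N) (M : 'M[R]_N) i j :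
    (diag_mx a *m M *m diag_mx b) i j = a 0 i * M i j * b 0 j.
  by rewrite mul_mx_diag mxE mul_diag_mx mxE.
have X21 : D2 *m symplJ R N *m D1 = 0.
  apply/matrixP => i j; rewrite [RHS]mxE mul_mx_diag mxE mul_diag_mx mxE d2E d1E.
  case: (eqVneq (symplJ R N i j) 0) => [->|/hJ ->]; first by rewrite mulr0 mul0r.
  by case: (t j); rewrite ?mulr0 ?mul0r.
have X12 : D1 *m symplJ R N *m D2 = 0.
  apply/matrixP => i j; rewrite [RHS]mxE mul_mx_diag mxE mul_diag_mx mxE d2E d1E.
  case: (eqVneq (symplJ R N i j) 0) => [->|/hJ ->]; first by rewrite mulr0 mul0r.
  by case: (t j); rewrite ?mulr0 ?mul0r.
have JD : D2 *m symplJ R N *m D2 + D1 *m symplJ R N *m D1 = symplJ R N.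
  apply/matrixP => i j; rewrite mxE !DJD !d2E !d1E.
  case: (eqVneq (symplJ R N i j) 0) => [->|/hJ tij]; first by rewrite !mulr0 !mul0r addr0.
  by rewrite tij; case: (t j); rewrite /= ?mulr1 ?mul1r ?mulr0 ?mul0r ?addr0 ?add0r.
have GP : (G <= P)%MS.
  apply/row_subP => k; have hk : (k < c + c)%N := leq_trans (ltn_ord k) (eq_leq rkV1).
  rewrite -natrowE -/(g k).
  case: (ltnP k c) => kc.
    have hi : (d + k < N)%N by have := NE; lia.
    have -> : g k = row (Ordinal hi) P.
      rewrite rowK /p /=.
      have -> : (d + k < h)%N by lia.
      have -> : (d + k < d)%N = false by lia.
      by rewrite addKn.
    exact: row_sub.
  have hi : (h + d + (k - c) < N)%N by have := NE; lia.
  have -> : g k = row (Ordinal hi) P.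
    rewrite rowK /p /=.
    have -> : (h + d + (k - c) < h)%N = false by lia.
    have -> : (h + d + (k - c) - h < d)%N = false by lia.
    by have -> : (c + (h + d + (k - c) - h - d))%N = k by lia.
  exact: row_sub.
have V1G : (V1 <= G)%MS by rewrite eq_row_base.
have Punit : P \in unitmx.
  rewrite -row_full_unit -sub1mx; apply: submx_trans (submx_full _ rfull) _.
  rewrite addsmx_sub (submx_trans V1G GP) /=.
  exact: submx_trans V2D2P (submxMl _ _).
pose S := X *m D2 + D1.
have SP : S *m P = P *m B.
  rewrite mulmxDl -mulmxA -hXe -D1PB -mulmxDl -mulmxDl D12 mul1mx //.
have K1 : X *m D2 *m symplJ R N *m (D2 *m X^T) = D2 *m symplJ R N *m D2.
  have -> : X *m D2 *m symplJ R N *m (D2 *m X^T) = X *m (D2 *m symplJ R N *m D2) *m X^T.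
    by rewrite !mulmxA.
  rewrite -PW.
  transitivity (X *m (D2 *m P) *m W *m (X *m (D2 *m P))^T).
    by rewrite (trmx_mul X) !mulmxA.
  rewrite -hXe trmx_mul Bsym !mulmxA.
  by rewrite -(mulmxA _ W B) -(mulmxA _ B (W *m B)) (mulmxA B W B) BWB.
have SJS : S *m symplJ R N *m S^T = symplJ R N.
  rewrite /S linearD /= trmx_mul !tr_diag_mx -/D2 -/D1.
  rewrite mulmxDl !mulmxDr !mulmxDl K1.
  rewrite -(mulmxA X D2 (symplJ R N)) -(mulmxA X (D2 *m symplJ R N) D1) X21 mulmx0 add0r.
  rewrite (mulmxA (D1 *m symplJ R N) D2) X12 mul0mx addr0 JD //.
have h1 : (- (symplJ R N *m S *m symplJ R N)) *m S^T = 1%:M.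
  by rewrite mulNmx -(mulmxA _ (symplJ R N)) -(mulmxA (symplJ R N)) (mulmxA S) SJS (JJ R Nev) opprK.
have h2 := mulmx1C h1.
exists P, S; split => //.
  have h3 : S^T *m symplJ R N *m S *m symplJ R N = - 1%:M.
    by apply/eqP; rewrite -eqr_oppLR -h2 mulmxN !mulmxA.
  rewrite -[LHS]mulmx1 -[1%:M]opprK -(JJ R Nev) mulmxN mulmxA h3 mulNmx mul1mx opprK //.
by rewrite -mulmxA SP mulmxA mulVmx ?mul1mx.
Qed.

End Abstract.

Section Alg.
Variable (R : rcfType) (n : nat) (Dv De A : 'M[R]_n).
Hypotheses (DvT : Dv^T = Dv) (DeT : De^T = De) (D12 : Dv + De = 1%:M)
  (DvDv : Dv *m Dv = Dv) (DeDe : De *m De = De) (DvDe : Dv *m De = 0) (DeDv : De *m Dv = 0)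
  (DvA : Dv *m A = A) (DeA : De *m A = 0) (ADv : A *m Dv = 0) (ADe : A *m De = A).

Lemma DvAt : Dv *m A^T = 0. Proof. by rewrite -DvT -trmx_mul ADv trmx0. Qed.
Lemma DeAt : De *m A^T = A^T. Proof. by rewrite -DeT -trmx_mul ADe. Qed.
Lemma AtDv : A^T *m Dv = A^T. Proof. by rewrite -DvT -trmx_mul DvA. Qed.
Lemma AtDe : A^T *m De = 0. Proof. by rewrite -DeT -trmx_mul DeA trmx0. Qed.
Lemma AA : A *m A = 0. Proof. by rewrite -{1}ADe -mulmxA DeA mulmx0. Qed.
Lemma AtAt : A^T *m A^T = 0. Proof. by rewrite -trmx_mul AA trmx0. Qed.

Let ctx (X Y Z : 'M[R]_n) : X *m Y = Z -> forall m (U : 'M[R]_(m, n)), U *m X *m Y = U *m Z.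
Proof. by move=> h m U; rewrite -mulmxA h. Qed.

Definition cDvDv := ctx DvDv. Definition cDeDe := ctx DeDe.
Lemma cDvDe m (U : 'M[R]_(m, n)) : U *m Dv *m De = 0. Proof. by rewrite (ctx DvDe) mulmx0. Qed.
Lemma cDeDv m (U : 'M[R]_(m, n)) : U *m De *m Dv = 0. Proof. by rewrite (ctx DeDv) mulmx0. Qed.
Definition cDvA := ctx DvA.
Lemma cDeA m (U : 'M[R]_(m, n)) : U *m De *m A = 0. Proof. by rewrite (ctx DeA) mulmx0. Qed.
Lemma cADv m (U : 'M[R]_(m, n)) : U *m A *m Dv = 0. Proof. by rewrite (ctx ADv) mulmx0. Qed.
Definition cADe := ctx ADe.
Lemma cDvAt m (U : 'M[R]_(m, n)) : U *m Dv *m A^T = 0. Proof. by rewrite (ctx DvAt) mulmx0. Qed.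
Definition cDeAt := ctx DeAt.
Definition cAtDv := ctx AtDv.
Lemma cAtDe m (U : 'M[R]_(m, n)) : U *m A^T *m De = 0. Proof. by rewrite (ctx AtDe) mulmx0. Qed.
Lemma cAA m (U : 'M[R]_(m, n)) : U *m A *m A = 0. Proof. by rewrite (ctx AA) mulmx0. Qed.
Lemma cAtAt m (U : 'M[R]_(m, n)) : U *m A^T *m A^T = 0. Proof. by rewrite (ctx AtAt) mulmx0. Qed.

Ltac simp := rewrite ?(mulmxDl, mulmxDr, mulmxBl, mulmxBr, mulNmx, mulmxN, mulmxA);
  rewrite ?(cDvDv, cDeDe, cDvDe, cDeDv, cDvA, cDeA, cADv, cADe, cDvAt, cDeAt, cAtDv, cAtDe, cAA, cAtAt,
            DvDv, DeDe, DvDe, DeDv, DvA, DeA, ADv, ADe, DvAt, DeAt, AtDv, AtDe, AA, AtAt,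
            mul0mx, mulmx0, mulmx1, mul1mx).

Definition L := Dv + A + A^T + A^T *m A - De.
Definition Li := Dv - A *m A^T + A + A^T - De.
Definition W := A - A^T.
Definition M := A + A^T.

Lemma L_Li : L *m Li = 1%:M.
Proof.
rewrite /L /Li; simp. rewrite -D12.
apply/matrixP => i j; rewrite !mxE. ring.
Qed.

Lemma LT : L^T = L.
Proof.
rewrite /L !linearD !linearN /= trmx_mul trmxK DvT DeT.
by apply/matrixP => i j; rewrite !mxE; ring.
Qed.

Lemma LWL : L *m W *m L = - W.
Proof.
rewrite /L /W; simp.
by apply/matrixP => i j; rewrite !mxE; ring.
Qed.

Lemma LmLi : L - Li = M *m M.
Proof.
rewrite /L /Li /M; simp.
by apply/matrixP => i j; rewrite !mxE; ring.
Qed.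

Lemma Li_L : Li *m L = 1%:M.
Proof. exact: mulmx1C L_Li. Qed.

Lemma MT : M^T = M.
Proof. by rewrite /M linearD /= trmxK addrC. Qed.

Lemma MM0 (z : 'rV[R]_n) : z *m M *m M = 0 -> z *m M = 0.
Proof.
move=> h; apply: sos.
by rewrite trmx_mul MT mulmxA h mul0mx mxE.
Qed.

Lemma yW_yLL (y : 'rV[R]_n) : y *m W = 0 -> y *m L *m L = y.
Proof.
move=> yW.
have yA : y *m A = 0.
  have : y *m W *m De = 0 by rewrite yW mul0mx.
  by rewrite /W; simp; rewrite subr0.
have yAt : y *m A^T = 0.
  have : y *m W *m Dv = 0 by rewrite yW mul0mx.
  by rewrite /W; simp; rewrite sub0r => /eqP; rewrite oppr_eq0 => /eqP.
rewrite /L; simp; rewrite ?(yA, yAt, mul0mx, mulmx0, subr0, sub0r, addr0, add0r, oppr0).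
by rewrite opprK -mulmxDr D12 mulmx1.
Qed.

Lemma fixW' (y : 'rV[R]_n) : (y *m (L *m L) == y) = (y *m W == 0).
Proof.
apply/eqP/eqP => [h|h]; last by rewrite mulmxA yW_yLL.
have e1 : y *m L = y *m Li.
  by rewrite -[in LHS](mulmx1 (y *m L)) -L_Li mulmxA -(mulmxA y L L) h.
have h1 : y *m (L - Li) = 0 by rewrite mulmxBr e1 subrr.
rewrite LmLi mulmxA in h1; have yM := MM0 h1.
have yA : y *m A = 0.
  by have := congr1 (mulmx^~ De) yM; rewrite /M; simp; rewrite ?addr0 ?add0r.
have yAt : y *m A^T = 0.
  by have := congr1 (mulmx^~ Dv) yM; rewrite /M; simp; rewrite ?addr0 ?add0r.
by rewrite /W mulmxBr yA yAt subr0.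
Qed.

Lemma disj' (x : 'rV[R]_n) : (x <= kermx (L *m L - 1%:M))%MS -> (x <= L *m L - 1%:M)%MS -> x = 0.
Proof.
have E1 : L *m L - 1%:M = M *m M *m L.
  by rewrite -LmLi [in RHS]mulmxBl Li_L.
have E2 : L *m L - 1%:M = L *m (M *m M) by rewrite -LmLi [in RHS]mulmxBr L_Li.
rewrite sub_kermx => /eqP hx /submxP [u hu].
have xMM : x *m M *m M = 0.
  have : x *m (M *m M *m L) *m Li = 0 by rewrite -E1 hx mul0mx.
  by rewrite !mulmxA -(mulmxA _ L Li) L_Li mulmx1.
have xM := MM0 xMM.
have : u *m L *m M *m M *m M = 0.
  by rewrite -(mulmxA u L M) -(mulmxA u (L *m M) M) -(mulmxA L M M) -E2 -hu xM.
move=> h0; have h2 := MM0 (z:=u *m L *m M) h0.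
by rewrite hu E2 !mulmxA h2.
Qed.

Lemma BWB : L *m L *m W *m (L *m L) = W.
Proof.
have h : L *m (L *m W *m L) *m L = W by rewrite LWL mulmxN mulNmx LWL opprK.
by rewrite !mulmxA in h *.
Qed.

Lemma BT : (L *m L)^T = L *m L.
Proof. by rewrite trmx_mul LT. Qed.

Lemma WT : W^T = - W.
Proof. by rewrite /W linearB /= trmxK opprB. Qed.
End Alg.

Section Graph.
Variables (R : rcfType) (T : finType) (e : rel T).
Local Notation N := #|simplices e|.
Definition sx (i : 'I_N) : {set T} := enum_val i.
Definition vert (i : 'I_N) := #|sx i| == 1%N.

Lemma sx_card i : (#|sx i| == 1%N) || (#|sx i| == 2%N).
Proof.
have := enum_valP i; rewrite /sx inE => /orP [->//|/andP [-> _]]; by rewrite orbT.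
Qed.

Lemma nvert2 i : ~~ vert i -> #|sx i| = 2%N.
Proof. by have := sx_card i; rewrite /vert => /orP [->//|/eqP ->]. Qed.

Lemma card_vert (S : {set T}) : #|[set k | vert k && (sx k \subset S)]| = #|S|.
Proof.
rewrite -(card_imset _ (@enum_val_inj _ _)) -(card_imset (mem S) (@set1_inj T)).
congr #|pred_of_set _|; apply/setP => Y.
apply/imsetP/imsetP => [[k] | [a aS ->]].
  rewrite inE => /andP [/cards1P [a ha] sk] ->; exists a; last by [].
  by move: sk; rewrite /sx in ha *; rewrite ha sub1set.
have H : [set a] \in simplices e by rewrite inE cards1 eqxx.
exists (enum_rank_in H [set a]); last by rewrite enum_rankK_in.
by rewrite inE /vert /sx enum_rankK_in // cards1 eqxx sub1set.
Qed.


Definition Ainc : 'M[R]_N := \matrix_(i, j) (vert i && ~~ vert j && (sx i \subset sx j))%:R.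
Definition dv : 'rV[R]_N := \row_i (vert i)%:R.
Definition de : 'rV[R]_N := \row_i (~~ vert i)%:R.
Definition Dv := diag_mx dv.
Definition De := diag_mx de.

Lemma DvT : Dv^T = Dv. Proof. exact: tr_diag_mx. Qed.
Lemma DeT : De^T = De. Proof. exact: tr_diag_mx. Qed.
Lemma D12 : Dv + De = 1%:M.
Proof. by apply/matrixP => i j; rewrite !mxE; case: (vert i); rewrite /= mul0rn ?addr0 ?add0r. Qed.

Lemma diag_diag (a b : 'rV[R]_N) : diag_mx a *m diag_mx b = diag_mx (\row_i (a 0 i * b 0 i)).
Proof.
apply/matrixP => i j; rewrite mul_diag_mx !mxE.
by case: (i == j); rewrite ?mulr1n ?mulr0n ?mulr0.
Qed.

Lemma DvDv : Dv *m Dv = Dv. Proof. by apply/matrixP => i j; rewrite ?mul_diag_mx ?mul_mx_diag !mxE;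
  case: (vert i); case: (vert j); case: (i == j); rewrite /= ?mulr1 ?mulr0 ?mul1r ?mul0r ?mulr0n ?mulr1n //. Qed.
Lemma DeDe : De *m De = De. Proof. by apply/matrixP => i j; rewrite ?mul_diag_mx ?mul_mx_diag !mxE;
  case: (vert i); case: (vert j); case: (i == j); rewrite /= ?mulr1 ?mulr0 ?mul1r ?mul0r ?mulr0n ?mulr1n //. Qed.
Lemma DvDe : Dv *m De = 0. Proof. by apply/matrixP => i j; rewrite ?mul_diag_mx ?mul_mx_diag !mxE;
  case: (vert i); case: (vert j); case: (i == j); rewrite /= ?mulr1 ?mulr0 ?mul1r ?mul0r ?mulr0n ?mulr1n //. Qed.
Lemma DeDv : De *m Dv = 0. Proof. by apply/matrixP => i j; rewrite ?mul_diag_mx ?mul_mx_diag !mxE;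
  case: (vert i); case: (vert j); case: (i == j); rewrite /= ?mulr1 ?mulr0 ?mul1r ?mul0r ?mulr0n ?mulr1n //. Qed.
Lemma DvA : Dv *m Ainc = Ainc. Proof. by apply/matrixP => i j; rewrite ?mul_diag_mx ?mul_mx_diag !mxE;
  case: (vert i); case: (vert j); case: (i == j); rewrite /= ?mulr1 ?mulr0 ?mul1r ?mul0r ?mulr0n ?mulr1n //. Qed.
Lemma DeA : De *m Ainc = 0. Proof. by apply/matrixP => i j; rewrite ?mul_diag_mx ?mul_mx_diag !mxE;
  case: (vert i); case: (vert j); case: (i == j); rewrite /= ?mulr1 ?mulr0 ?mul1r ?mul0r ?mulr0n ?mulr1n //. Qed.
Lemma ADv : Ainc *m Dv = 0. Proof. by apply/matrixP => i j; rewrite ?mul_diag_mx ?mul_mx_diag !mxE;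
  case: (vert i); case: (vert j); case: (i == j); rewrite /= ?mulr1 ?mulr0 ?mul1r ?mul0r ?mulr0n ?mulr1n //. Qed.
Lemma ADe : Ainc *m De = Ainc. Proof. by apply/matrixP => i j; rewrite ?mul_diag_mx ?mul_mx_diag !mxE;
  case: (vert i); case: (vert j); case: (i == j); rewrite /= ?mulr1 ?mulr0 ?mul1r ?mul0r ?mulr0n ?mulr1n //. Qed.

Lemma sum_bool (b : pred 'I_N) : \sum_k ((b k)%:R : R) = #|b|%:R.
Proof.
rewrite -[#|b|]sum1_card natr_sum [RHS]big_mkcond /=; apply: eq_bigr => k _.
by rewrite unfold_in; case: (b k).
Qed.

Lemma AtA_E i j : (Ainc^T *m Ainc) i j = ((~~ vert i) && (~~ vert j))%:R * (#|sx i :&: sx j|)%:R.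
Proof.
rewrite !mxE.
transitivity ((~~ vert i && ~~ vert j)%:R * \sum_k ((vert k && (sx k \subset sx i :&: sx j))%:R : R)).
  rewrite mulr_sumr; apply: eq_bigr => k _; rewrite !mxE subsetI.
  case: (vert k); case: (vert i); case: (vert j); case: (sx k \subset sx i); case: (sx k \subset sx j);
    by rewrite /= ?mulr1 ?mulr0 ?mul1r ?mul0r.
rewrite sum_bool -(card_vert (sx i :&: sx j)); congr (_ * _%:R).
by apply: eq_card => k; rewrite inE.
Qed.

Lemma connmxE : connmx R e = L Dv De Ainc.
Proof.
apply/matrixP => i j; rewrite /L !mxE.
have := AtA_E i j; rewrite mxE => ->.
rewrite -[enum_val i]/(sx i) -[enum_val j]/(sx j).
have cij : (i == j) = (sx i == sx j).
  by apply/eqP/eqP => [->//|]; apply: enum_val_inj.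
have s1 (k : 'I_N) (X : {set T}) : vert k -> (sx k :&: X != set0) = (sx k \subset X).
  by move=> /cards1P [a ->]; rewrite setI_eq0 disjoints1 negbK sub1set.
case vi: (vert i); case vj: (vert j); rewrite /= ?mul0r ?mul0rn ?subr0 ?addr0 ?add0r.
- rewrite s1 // cij; move: vi vj; rewrite /vert => /cards1P [a ->] /cards1P [b ->].
  rewrite sub1set in_set1 (inj_eq (@set1_inj T)).
  by case: (a == b); rewrite ?subr0.
- have -> : (i == j) = false by apply/negbTE; apply: contraFN vj => /eqP <-.
  by rewrite s1 // mulr0n add0r; case: (_ \subset _).
- have -> : (i == j) = false by apply/negbTE; apply: contraFN vi => /eqP ->.
  by rewrite setIC s1 // mulr0n subr0; case: (sx j \subset sx i).
- rewrite mul1r.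
  case: (eqVneq i j) => [<-|nij].
    rewrite setIid nvert2 ?vi // mulr1n.
    have -> : (sx i != set0) by rewrite -cards_eq0 nvert2 ?vi.
    by rewrite [2%:R]mulr2n -addrA subrr addr0.
  rewrite mulr0n subr0.
  have le1 : (#|sx i :&: sx j| <= 1)%N.
    rewrite leqNgt; apply/negP => h2.
    have e1 : sx i :&: sx j = sx i.
      by apply/eqP; rewrite eqEcard subsetIl nvert2 ?vi.
    have e2 : sx i :&: sx j = sx j.
      by apply/eqP; rewrite eqEcard subsetIr nvert2 ?vj.
    by move: nij; rewrite cij (etrans (esym e1) e2) eqxx.
  rewrite -cards_eq0; move: le1; case: #|_| => [|[|]] //.
Qed.
End Graph.

Theorem mainTheorem5 (R : rcfType) (T : finType) (e : rel T)
  (e_sym : symmetric e) (e_irr : irreflexive e)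
  (Heven : ~~ odd #|simplices e|) :
  exists (P S : 'M[R]_(#|simplices e|)),
    [/\ P \in unitmx,
        S^T *m symplJ R #|simplices e| *m S = symplJ R #|simplices e|
      & connmx R e *m connmx R e = invmx P *m S *m P].
Proof.
rewrite connmxE.
have h1 := DvT R e; have h2 := DeT R e; have h3 := D12 R e; have h4 := DvDv R e.
have h5 := DeDe R e; have h6 := DvDe R e; have h7 := DeDv R e; have h8 := DvA R e.
have h9 := DeA R e; have h10 := ADv R e; have h11 := ADe R e.
apply: (abstract_main (W := W (Ainc R e))) => //.
- exact: BT.
- exact: WT.
- exact: BWB.
- exact: fixW'.
- exact: disj'.
Qed.
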